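(* Let $f\in\mathcal{K}$ have radius of convergence $R>0$ and fulcrum $F$. Assume that $f$ is Gaussian and that for some even integer $n\ge4$, $$\limsup_{s\uparrow\ln R}\frac{|F^{(j)}(s)|}{F''(s)^{j/2}}<+\infty\quad\text{for every }3\le j\le n.$$ Then $$\lim_{s\uparrow\ln R}\frac{F^{(j)}(s)}{F''(s)^{j/2}}=0\quad\text{for every }3\le j<n.$$
   Context: The class $\mathcal{K}$ consists of non-constant power series $f(z)=\sum_{n\ge0}a_nz^n$ with radius of convergence $R\in(0,+\infty]$, with $a_n\ge 0$ for all $n$ and $a_0>0$. For $t\in(0,R)$, $X_t$ is the random variable with $\mathbf{P}(X_t=n)=a_nt^n/f(t)$, $n\ge0$. Write $m_f(t)=\mathbf{E}(X_t)$, $\sigma_f^2(t)=\mathbf{V}(X_t)>0$ and $\breve{X}_t=(X_t-m_f(t))/\sigma_f(t)$. $f$ is called Gaussian if $\breve{X}_t$ converges in distribution to a standard normal random variable as $t\uparrow R$. The fulcrum of $f$ is $F(s)=\ln f(e^s)$ for real $s<\ln R$ (with $\ln R=+\infty$ if $R=+\infty$); $F''(s)=\sigma_f^2(e^s)$. *)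

(* Defs.v *)
From Stdlib Require Import Reals Lra.
From Coquelicot Require Import Coquelicot.
Open Scope R_scope.

Definition in_class_K (a : nat -> R) : Prop :=
  (forall n, 0 <= a n) /\ 0 < a 0%nat /\ (exists n, (1 <= n)%nat /\ a n <> 0)
  /\ Rbar_lt (Finite 0) (CV_radius a).

Definition pf (a : nat -> R) (t : R) : R := PSeries a t.

(* mean and variance of X_t, P(X_t = n) = a_n t^n / f(t) *)
Definition mean_f (a : nat -> R) (t : R) : R :=
  Series (fun n => INR n * (a n * t ^ n)) / pf a t.
Definition var_f (a : nat -> R) (t : R) : R :=
  Series (fun n => (INR n - mean_f a t) ^ 2 * (a n * t ^ n)) / pf a t.
Definition sd_f (a : nat -> R) (t : R) : R := sqrt (var_f a t).

Definition cdf_breve (a : nat -> R) (t x : R) : R :=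
  Series (fun n => if Rle_dec ((INR n - mean_f a t) / sd_f a t) x
                   then a n * t ^ n else 0) / pf a t.

Definition Phi (x : R) : R :=
  RInt_gen (fun u => exp (- u ^ 2 / 2) / sqrt (2 * PI))
           (Rbar_locally m_infty) (at_point x).

Definition left_to (L : Rbar) : (R -> Prop) -> Prop :=
  match L with
  | Finite r => at_left r
  | _ => Rbar_locally L
  end.

Definition Rbar_ln (L : Rbar) : Rbar :=
  match L with
  | Finite r => Finite (ln r)
  | p_infty => p_infty
  | m_infty => m_infty
  end.

(* Gaussian: breve X_t converges in distribution to N(0,1) as t -> R^-
   (convergence of CDFs at every point, all points being continuity points
   of Phi). *)
Definition gaussian (a : nat -> R) : Prop :=
  forall x : R,
    filterlim (fun t => cdf_breve a t x) (left_to (CV_radius a)) (locally (Phi x)).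

Definition fulcrum (a : nat -> R) (s : R) : R := ln (pf a (exp s)).

Definition norm_deriv (a : nat -> R) (j : nat) (s : R) : R :=
  Derive_n (fulcrum a) j s / Rpower (Derive_n (fulcrum a) 2 s) (INR j / 2).

(* Main.v *)
Require Import Defs.
From Stdlib Require Import Reals.
From Coquelicot Require Import Coquelicot.
Open Scope R_scope.
From Stdlib Require Import Lra Lia Factorial.


Ltac cont_tac := apply (@ex_derive_continuous R_AbsRing R_NormedModule); auto_derive; auto.

Definition phi (u : R) : R := exp (- u ^ 2 / 2) / sqrt (2 * PI).

Lemma exp_le_mono x y : x <= y -> exp x <= exp y.
Proof. intros [H|H]. left; apply exp_increasing; auto. subst; lra. Qed.

Lemma sqrt2pi_ge1 : 1 <= sqrt (2 * PI).
Proof.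
  rewrite <- sqrt_1. apply sqrt_le_1_alt. pose proof PI2_1. lra.
Qed.

Lemma phi_pos u : 0 < phi u.
Proof.
  unfold phi. apply Rdiv_lt_0_compat. apply exp_pos. pose proof sqrt2pi_ge1; lra.
Qed.

Lemma phi_le_exp u : phi u <= exp (- u ^ 2 / 2).
Proof.
  unfold phi. pose proof sqrt2pi_ge1. pose proof (exp_pos (- u ^ 2 / 2)).
  apply Rmult_le_reg_r with (sqrt (2*PI)); [lra|].
  unfold Rdiv. rewrite Rmult_assoc, Rinv_l by lra. nra.
Qed.

Lemma phi_le_1 u : phi u <= 1.
Proof.
  eapply Rle_trans. apply phi_le_exp. rewrite <- exp_0. apply exp_le_mono. 
  pose proof (pow2_ge_0 u). lra.
Qed.

Lemma phi_le_exp_lin u : phi u <= exp (u + /2).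
Proof.
  eapply Rle_trans. apply phi_le_exp. apply exp_le_mono.
  pose proof (pow2_ge_0 (u+1)). simpl in *. nra.
Qed.

Lemma phi_cont u : continuous phi u.
Proof.
  apply (@ex_derive_continuous R_AbsRing R_NormedModule). unfold phi. auto_derive. auto.
Qed.

Lemma ex_RInt_phi a b : ex_RInt phi a b.
Proof. apply (@ex_RInt_continuous R_CompleteNormedModule). intros; apply phi_cont. Qed.

Lemma RInt_phi_bound u v : u <= v -> 0 <= RInt phi u v <= exp (v + /2).
Proof.
  intros Huv.
  assert (He : is_RInt (fun t => exp (t + /2)) u v (exp (v + /2) - exp (u + /2))).
  { apply (is_RInt_derive (fun t => exp (t + /2))).
    - intros x _. auto_derive; auto. ring.
    - intros x _. cont_tac. }
  split.
  - apply RInt_ge_0; auto. apply ex_RInt_phi. intros; left; apply phi_pos.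
  - apply Rle_trans with (exp (v + /2) - exp (u + /2)).
    + rewrite <- (is_RInt_unique _ _ _ _ He). apply RInt_le; auto. apply ex_RInt_phi.
      eexists; eauto. intros; apply phi_le_exp_lin.
    + pose proof (exp_pos (u + /2)); lra.
Qed.

Lemma RInt_phi_diff_abs u v x : Rabs (RInt phi u x - RInt phi v x) <= exp (Rmax u v + /2).
Proof.
  rewrite <- (RInt_Chasles phi u v x) by apply ex_RInt_phi.
  change (Rabs (RInt phi u v + RInt phi v x - RInt phi v x) <= exp (Rmax u v + /2)).
  assert (E : forall p q : R, p + q - q = p) by (intros; ring). rewrite E.
  destruct (Rle_dec u v) as [H|H].
  - rewrite Rmax_right by auto. destruct (RInt_phi_bound u v H). rewrite Rabs_pos_eq; lra.
  - rewrite Rmax_left by lra. rewrite <- opp_RInt_swap by apply ex_RInt_phi.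
    destruct (RInt_phi_bound v u) as [H1 H2]; [lra|].
    unfold opp; simpl. rewrite Rabs_Ropp, Rabs_pos_eq; lra.
Qed.

Lemma phi_int_lim x : exists l, filterlim (fun y => RInt phi y x) (Rbar_locally m_infty) (locally l).
Proof.
  apply (filterlim_locally_cauchy (U := R_CompleteSpace)).
  intros eps. exists (fun y => y < ln eps - /2). split.
  - exists (ln eps - /2). auto.
  - intros u v Hu Hv. change (Rabs (RInt phi v x - RInt phi u x) < eps).
    eapply Rle_lt_trans. apply RInt_phi_diff_abs.
    rewrite <- (exp_ln eps) by apply cond_pos. apply exp_increasing.
    apply Rmax_case; lra.
Qed.

Lemma is_RInt_gen_phi x : exists l, is_RInt_gen phi (Rbar_locally m_infty) (at_point x) l.
Proof.
  destruct (phi_int_lim x) as [l Hl]. exists l.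
  intros P HP. unfold filtermapi.
  apply Filter_prod with (Q := fun y => P (RInt phi y x)) (R := fun b => b = x).
  - apply Hl. auto.
  - reflexivity.
  - intros y b Hy Hb. subst b. simpl. exists (RInt phi y x). split; auto.
    apply (@RInt_correct R_CompleteNormedModule). apply ex_RInt_phi.
Qed.

Lemma Phi_diff a b : Phi b - Phi a = RInt phi a b.
Proof.
  destruct (is_RInt_gen_phi a) as [la Ha]. destruct (is_RInt_gen_phi b) as [lb Hb].
  assert (Hab : is_RInt_gen phi (Rbar_locally m_infty) (at_point b) (plus la (RInt phi a b))).
  { apply (is_RInt_gen_Chasles (Fa := Rbar_locally m_infty) (Fc := at_point b) phi a); auto.
    apply is_RInt_gen_at_point. apply (@RInt_correct R_CompleteNormedModule). apply ex_RInt_phi. }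
  unfold Phi. change (fun u => exp (- u ^ 2 / 2) / sqrt (2 * PI)) with phi.
  rewrite (is_RInt_gen_unique _ _ Hab), (is_RInt_gen_unique _ _ Ha).
  unfold plus; simpl; ring.
Qed.

Lemma ex_RInt_powphi m a b : ex_RInt (fun t => t ^ m * phi t) a b.
Proof. apply (@ex_RInt_continuous R_CompleteNormedModule). intros; unfold phi; cont_tac. Qed.


Lemma IBP_phi m a b :
  RInt (fun t => t ^ (m + 2) * phi t) a b =
  INR (m + 1) * RInt (fun t => t ^ m * phi t) a b - (b ^ (m + 1) * phi b - a ^ (m + 1) * phi a).
Proof.
  assert (H : is_RInt (fun t => INR (m+1) * (t ^ m * phi t) - t ^ (m + 2) * phi t) a b
                 (b ^ (m + 1) * phi b - a ^ (m + 1) * phi a)).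
  { apply (is_RInt_derive (fun t => t ^ (m+1) * phi t)).
    - intros x _. unfold phi. auto_derive. auto.
      rewrite !pow_add. replace (Init.Nat.pred (m+1)) with m by lia.
      simpl. unfold Rdiv. set (E := exp _). set (S := sqrt _). set (I := INR _). field. unfold S. apply Rgt_not_eq. pose proof sqrt2pi_ge1. lra.
    - intros x _. unfold phi. cont_tac. }
  assert (H2 : is_RInt (fun t => INR (m+1) * (t ^ m * phi t) - t ^ (m + 2) * phi t) a b
     (INR (m + 1) * RInt (fun t => t ^ m * phi t) a b - RInt (fun t => t ^ (m + 2) * phi t) a b)).
  { apply (@is_RInt_minus R_NormedModule).
    apply (@is_RInt_scal R_NormedModule). apply (@RInt_correct R_CompleteNormedModule). apply ex_RInt_powphi.
    apply (@RInt_correct R_CompleteNormedModule). apply ex_RInt_powphi. }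
  pose proof (is_RInt_unique _ _ _ _ H) as E1. pose proof (is_RInt_unique _ _ _ _ H2) as E2.
  rewrite E1 in E2. lra.
Qed.

Lemma sum_f_R0_ge_last (f : nat -> R) k : (forall i, 0 <= f i) -> f k <= sum_f_R0 f k.
Proof.
  intros Hf. destruct k. simpl; lra.
  simpl. assert (0 <= sum_f_R0 f k).
  { clear - Hf. induction k; simpl. apply Hf. pose proof (Hf (S k)); lra. }
  lra.
Qed.

Lemma exp_ge_pow y k : 0 <= y -> y ^ k / INR (fact k) <= exp y.
Proof.
  intros Hy. eapply Rle_trans; [|apply exp_ge_taylor; auto].
  apply (sum_f_R0_ge_last (fun i => y ^ i / INR (fact i))).
  intros i. apply Rdiv_le_0_compat. apply pow_le; auto. apply lt_0_INR, lt_O_fact.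
Qed.

Lemma phi_even u : phi (- u) = phi u.
Proof. unfold phi. f_equal. f_equal. f_equal. ring. Qed.

Lemma phi_tail_bound m L : 1 <= L ->
  L ^ (m + 1) * phi L <= INR (fact (m + 2)) * 2 ^ (m + 2) / L.
Proof.
  intros HL.
  set (K := INR (fact (m + 2)) * 2 ^ (m + 2)).
  assert (HK : 0 < K). { unfold K. apply Rmult_lt_0_compat. apply lt_0_INR, lt_O_fact. apply pow_lt; lra. }
  assert (HF : 0 < INR (fact (m+2))) by apply lt_0_INR, lt_O_fact.
  assert (Hexp : L ^ (2 * (m + 2)) / K <= exp (L ^ 2 / 2)).
  { eapply Rle_trans; [|apply exp_ge_pow with (k := (m+2)%nat)].
    - right. unfold K. rewrite pow_mult. unfold Rdiv. rewrite Rpow_mult_distr, pow_inv.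
      field. split; apply Rgt_not_eq; [lra | apply pow_lt; lra].
    - pose proof (pow2_ge_0 L); lra. }
  assert (HLp : forall k, 0 < L ^ k) by (intros; apply pow_lt; lra).
  assert (Hphi : phi L <= K / L ^ (2 * (m + 2))).
  { eapply Rle_trans. apply phi_le_exp.
    replace (- L ^ 2 / 2) with (- (L ^ 2 / 2)) by field. rewrite exp_Ropp.
    assert (0 < L ^ (2 * (m + 2)) / K) by (apply Rdiv_lt_0_compat; auto).
    replace (K / L ^ (2 * (m + 2))) with (/ (L ^ (2 * (m + 2)) / K))
      by (field; split; apply Rgt_not_eq; [apply HLp|lra]).
    apply Rinv_le_contravar; auto. }
  assert (E : L ^ (2 * (m + 2)) = L ^ (m + 1) * L ^ (m + 3)) by (rewrite <- pow_add; f_equal; lia).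
  assert (HL3 : L <= L ^ (m + 3)).
  { replace (m+3)%nat with (S (m+2)) by lia. simpl. 
    pose proof (pow_R1_Rle L (m+2) HL). nra. }
  apply Rle_trans with (L ^ (m + 1) * (K / L ^ (2 * (m + 2)))).
  { apply Rmult_le_compat_l; auto. left; auto. }
  rewrite E. replace (L ^ (m + 1) * (K / (L ^ (m + 1) * L ^ (m + 3)))) with (K / L ^ (m + 3))
    by (field; split; apply Rgt_not_eq; apply HLp).
  unfold Rdiv. apply Rmult_le_compat_l; [lra|]. apply Rinv_le_contravar; lra.
Qed.

Lemma phi_boundary_small m eps : 0 < eps -> exists L0, 1 <= L0 /\ forall L, L0 <= L ->
  Rabs (L ^ (m + 1) * phi L - (- L) ^ (m + 1) * phi (- L)) <= eps.
Proof.
  intros He. set (K := INR (fact (m + 2)) * 2 ^ (m + 2)).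
  assert (HK : 0 < K). { unfold K. apply Rmult_lt_0_compat. apply lt_0_INR, lt_O_fact. apply pow_lt; lra. }
  exists (Rmax 1 (2 * K / eps)). split. apply Rmax_l. intros L HL.
  assert (H1 : 1 <= L) by (eapply Rle_trans; [apply Rmax_l|eauto]).
  assert (H2 : 2 * K / eps <= L) by (eapply Rle_trans; [apply Rmax_r|eauto]).
  rewrite phi_even. eapply Rle_trans. apply Rabs_triang. rewrite Rabs_Ropp.
  rewrite !Rabs_mult, <- !RPow_abs, Rabs_Ropp, !(Rabs_pos_eq (phi L)) by (left; apply phi_pos).
  rewrite Rabs_pos_eq by lra.
  pose proof (phi_tail_bound m L H1). fold K in H.
  assert (K / L <= eps / 2).
  { apply Rmult_le_reg_r with L; [lra|]. unfold Rdiv. rewrite Rmult_assoc, Rinv_l by lra.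
    apply Rmult_le_reg_r with (2 / eps). apply Rdiv_lt_0_compat; lra.
    replace (eps * / 2 * L * (2 / eps)) with L by (field; lra).
    replace (K * 1 * (2 / eps)) with (2 * K / eps) by (field; lra). auto. }
  lra.
Qed.


Definition Ind (c z : R) : R := if Rle_dec z c then 1 else 0.

Definition psi (y x : nat -> R) (N : nat) (z : R) : R :=
  sum_n (fun i => y (S i) * (Ind (x (S i)) z - Ind (x i) z)) N.

Lemma sum_Sn_R (a : nat -> R) n : sum_n a (S n) = sum_n a n + a (S n).
Proof. rewrite sum_Sn. reflexivity. Qed.

Lemma sum_O_R (a : nat -> R) : sum_n a 0 = a 0%nat.
Proof. apply sum_O. Qed.

Lemma psi_spec (y x : nat -> R) (Hx : forall i, x i < x (S i)) N z :
  (z <= x 0%nat -> psi y x N z = 0) /\ (x (S N) < z -> psi y x N z = 0) /\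
  (x 0%nat < z <= x (S N) -> exists i, (i <= N)%nat /\ x i < z <= x (S i) /\ psi y x N z = y (S i)).
Proof.
  assert (Hmono : forall i k, (i <= k)%nat -> x i <= x k).
  { intros i k Hik. induction Hik. lra. pose proof (Hx m); lra. }
  induction N as [|N IH].
  - unfold psi. rewrite sum_O_R. unfold Ind. pose proof (Hx 0%nat).
    split; [|split].
    + intros Hz. destruct (Rle_dec z (x 1%nat)); destruct (Rle_dec z (x 0%nat)); lra.
    + intros Hz. destruct (Rle_dec z (x 1%nat)); destruct (Rle_dec z (x 0%nat)); lra.
    + intros Hz. exists 0%nat. split; auto. split; auto.
      destruct (Rle_dec z (x 1%nat)); destruct (Rle_dec z (x 0%nat)); lra.
  - destruct IH as [IH1 [IH2 IH3]].
    assert (Hs : psi y x (S N) z = psi y x N z + y (S (S N)) * (Ind (x (S (S N))) z - Ind (x (S N)) z)).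
    { unfold psi. rewrite sum_Sn_R. reflexivity. }
    pose proof (Hx (S N)). pose proof (Hmono 0%nat (S N) ltac:(lia)).
    split; [|split].
    + intros Hz. rewrite Hs, IH1 by auto. unfold Ind.
      destruct (Rle_dec z (x (S (S N)))); destruct (Rle_dec z (x (S N))); lra.
    + intros Hz. rewrite Hs, IH2 by lra. unfold Ind.
      destruct (Rle_dec z (x (S (S N)))); destruct (Rle_dec z (x (S N))); lra.
    + intros Hz. destruct (Rle_dec z (x (S N))) as [Hle|Hgt].
      * destruct (IH3 (conj (proj1 Hz) Hle)) as [i [Hi1 [Hi2 Hi3]]].
        exists i. split; [lia|]. split; auto. rewrite Hs, Hi3. unfold Ind.
        destruct (Rle_dec z (x (S (S N)))); destruct (Rle_dec z (x (S N))); lra.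
      * exists (S N). split; auto. split; [lra|]. rewrite Hs, IH2 by lra. unfold Ind.
        destruct (Rle_dec z (x (S (S N)))); destruct (Rle_dec z (x (S N))); lra.
Qed.

Lemma pow_lipschitz j M z y : Rabs z <= M -> Rabs y <= M ->
  Rabs (z ^ j - y ^ j) <= INR j * M ^ (j - 1) * Rabs (z - y).
Proof.
  intros Hz Hy. assert (HM : 0 <= M) by (pose proof (Rabs_pos z); lra).
  induction j as [|j IH].
  - simpl. rewrite Rminus_diag, Rabs_R0. lra.
  - replace (z ^ S j - y ^ S j) with (z * (z ^ j - y ^ j) + y ^ j * (z - y)) by (simpl; ring).
    eapply Rle_trans. apply Rabs_triang. rewrite !Rabs_mult.
    rewrite <- RPow_abs.
    assert (Hyj : Rabs y ^ j <= M ^ j) by (apply pow_incr; split; auto; apply Rabs_pos).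
    destruct j as [|j].
    + simpl in *. rewrite Rminus_diag, Rabs_R0. simpl. nra.
    + replace (S (S j) - 1)%nat with (S j) by lia. replace (S j - 1)%nat with j in IH by lia.
      rewrite S_INR. 
      assert (Hzd : 0 <= Rabs (z - y)) by apply Rabs_pos.
      assert (HMj : 0 <= M ^ j) by (apply pow_le; auto).
      assert (Rabs z * Rabs (z ^ S j - y ^ S j) <= M * (INR (S j) * M ^ j * Rabs (z - y))).
      { apply Rmult_le_compat; auto using Rabs_pos. }
      replace (M ^ S j) with (M * M ^ j) by reflexivity.
      assert (Rabs y ^ S j * Rabs (z - y) <= M ^ S j * Rabs (z - y)).
      { apply Rmult_le_compat_r; auto. }
      eapply Rle_trans; [apply Rplus_le_compat; eauto|]. right. rewrite S_INR. simpl. ring.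
Qed.

Definition hstep (L : R) (N : nat) : R := 2 * L / INR (S N).
Definition grid (L : R) (N : nat) (i : nat) : R := - L + INR i * hstep L N.

Lemma hstep_pos L N : 0 < L -> 0 < hstep L N.
Proof. intros; unfold hstep. apply Rdiv_lt_0_compat. lra. apply lt_0_INR; lia. Qed.

Lemma grid_S L N i : grid L N (S i) = grid L N i + hstep L N.
Proof. unfold grid. rewrite S_INR. ring. Qed.

Lemma grid_0 L N : grid L N 0 = - L.
Proof. unfold grid. simpl. ring. Qed.

Lemma grid_last L N : grid L N (S N) = L.
Proof. unfold grid, hstep. field. apply Rgt_not_eq, lt_0_INR; lia. Qed.

Lemma grid_range L N i : 0 < L -> (i <= S N)%nat -> - L <= grid L N i <= L.
Proof.
  intros HL Hi. pose proof (hstep_pos L N HL). unfold grid. split.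
  - pose proof (pos_INR i). nra.
  - assert (INR i * hstep L N <= INR (S N) * hstep L N).
    { apply Rmult_le_compat_r; [lra|]. apply le_INR; auto. }
    assert (INR (S N) * hstep L N = 2 * L).
    { unfold hstep. field. apply Rgt_not_eq, lt_0_INR; lia. }
    lra.
Qed.

Lemma even_pow_abs n z : (exists k, n = 2 * k)%nat -> z ^ n = Rabs z ^ n.
Proof.
  intros [k ->]. rewrite !pow_mult. f_equal. rewrite RPow_abs.
  rewrite Rabs_pos_eq; auto. apply pow2_ge_0.
Qed.

Lemma pow_tail_bound n j z L : 0 < L -> L <= Rabs z -> (j <= n)%nat ->
  Rabs z ^ j <= Rabs z ^ n / L ^ (n - j).
Proof.
  intros HL Hz Hj. assert (HLp : 0 < L ^ (n - j)) by (apply pow_lt; auto).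
  apply Rmult_le_reg_r with (L ^ (n - j)); auto.
  unfold Rdiv. rewrite Rmult_assoc, Rinv_l, Rmult_1_r by lra.
  replace n with (j + (n - j))%nat at 2 by lia. rewrite pow_add.
  apply Rmult_le_compat_l. apply pow_le, Rabs_pos. apply pow_incr. lra.
Qed.

Lemma psi_bound L N j n z : 0 < L -> (exists k, n = 2 * k)%nat -> (j < n)%nat ->
  Rabs (z ^ j - psi (fun i => grid L N i ^ j) (grid L N) N z)
    <= INR j * L ^ (j - 1) * hstep L N + z ^ n / L ^ (n - j).
Proof.
  intros HL Hn Hj.
  pose proof (hstep_pos L N HL) as Hh.
  assert (Hinc : forall i, grid L N i < grid L N (S i)) by (intros; rewrite grid_S; lra).
  destruct (psi_spec (fun i => grid L N i ^ j) (grid L N) Hinc N z) as [P1 [P2 P3]].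
  rewrite grid_0 in P1, P3. rewrite grid_last in P2, P3.
  assert (Hom : 0 <= INR j * L ^ (j - 1) * hstep L N).
  { apply Rmult_le_pos; [apply Rmult_le_pos; [apply pos_INR| apply pow_le; lra]|lra]. }
  assert (Htail : 0 <= z ^ n / L ^ (n - j)).
  { rewrite (even_pow_abs n z Hn). apply Rdiv_le_0_compat. apply pow_le, Rabs_pos. apply pow_lt; auto. }
  assert (Hout : L <= Rabs z -> Rabs (z ^ j) <= z ^ n / L ^ (n - j)).
  { intros. rewrite <- RPow_abs, (even_pow_abs n z Hn). apply pow_tail_bound; auto; lia. }
  destruct (Rle_dec z (- L)) as [H1|H1].
  { rewrite P1 by auto. rewrite Rminus_0_r. assert (L <= Rabs z).
    { rewrite Rabs_left1 by lra. lra. }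
    specialize (Hout H). lra. }
  destruct (Rle_dec z L) as [H2|H2].
  - destruct (P3 (conj (Rnot_le_lt _ _ H1) H2)) as [i [Hi [[Hz1 Hz2] Hpsi]]].
    rewrite Hpsi. rewrite grid_S in Hz2.
    assert (Hr : - L <= grid L N (S i) <= L) by (apply grid_range; auto; lia).
    eapply Rle_trans. apply pow_lipschitz with (M := L).
    + apply Rabs_le. lra.
    + apply Rabs_le. lra.
    + assert (Rabs (z - grid L N (S i)) <= hstep L N).
      { rewrite grid_S. apply Rabs_le. lra. }
      assert (0 <= INR j * L ^ (j - 1)) by (apply Rmult_le_pos; [apply pos_INR| apply pow_le; lra]).
      pose proof (Rmult_le_compat_l _ _ _ H0 H). lra.
  - rewrite P2 by lra. rewrite Rminus_0_r. assert (L <= Rabs z).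
    { rewrite Rabs_pos_eq by lra. lra. }
    specialize (Hout H). lra.
Qed.

Lemma sum_n_mult_r_R (a : R) (u : nat -> R) n : sum_n (fun k => u k * a) n = sum_n u n * a.
Proof. apply (sum_n_mult_r (K := R_Ring)). Qed.

Lemma sum_n_mult_l_R (a : R) (u : nat -> R) n : sum_n (fun k => a * u k) n = a * sum_n u n.
Proof. apply (sum_n_mult_l (K := R_Ring)). Qed.

Lemma ex_series_sum_n (u : nat -> nat -> R) N :
  (forall i, (i <= N)%nat -> ex_series (u i)) -> ex_series (fun k => sum_n (fun i => u i k) N).
Proof.
  induction N as [|N IH]; intros H.
  - eapply ex_series_ext; [|apply (H 0%nat); lia]. intros k. rewrite sum_O_R. auto.
  - eapply ex_series_ext. intros k. rewrite <- sum_Sn_R. reflexivity.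
    apply (ex_series_plus (V := R_NormedModule)). apply IH. intros; apply H; lia. apply H; lia.
Qed.

Lemma Series_sum_n (u : nat -> nat -> R) N :
  (forall i, (i <= N)%nat -> ex_series (u i)) ->
  Series (fun k => sum_n (fun i => u i k) N) = sum_n (fun i => Series (u i)) N.
Proof.
  induction N as [|N IH]; intros H.
  - rewrite sum_O_R. apply Series_ext. intros; apply sum_O_R.
  - rewrite sum_Sn_R. rewrite <- IH by (intros; apply H; lia).
    rewrite <- Series_plus. apply Series_ext. intros; apply sum_Sn_R.
    apply ex_series_sum_n. intros; apply H; lia. apply H; lia.
Qed.

Lemma ex_series_Ind (w z : nat -> R) c : (forall k, 0 <= w k) -> ex_series w ->
  ex_series (fun k => Ind c (z k) * w k).
Proof.
  intros Hw Hs. apply (ex_series_le (V := R_CompleteNormedModule)) with w; auto.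
  intros k. change (Rabs (Ind c (z k) * w k) <= w k). unfold Ind.
  destruct (Rle_dec (z k) c); rewrite Rabs_pos_eq; try lra; try (rewrite Rmult_0_l; lra).
  rewrite Rmult_1_l; auto. specialize (Hw k). nra.
Qed.

Lemma pow_le_1_plus n j z : (exists k, n = 2 * k)%nat -> (j <= n)%nat -> Rabs (z ^ j) <= 1 + z ^ n.
Proof.
  intros Hn Hj. rewrite <- RPow_abs, (even_pow_abs n z Hn).
  destruct (Rle_dec (Rabs z) 1).
  - assert (Rabs z ^ j <= 1). { rewrite <- (pow1 j). apply pow_incr. split; auto. apply Rabs_pos. }
    pose proof (pow_le (Rabs z) n (Rabs_pos z)). lra.
  - assert (Rabs z ^ j <= Rabs z ^ n) by (apply Rle_pow; auto; lra). lra.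
Qed.

Lemma ex_series_powj (w z : nat -> R) n j : (forall k, 0 <= w k) -> ex_series w ->
  ex_series (fun k => z k ^ n * w k) -> (exists k, n = 2 * k)%nat -> (j <= n)%nat ->
  ex_series (fun k => z k ^ j * w k).
Proof.
  intros Hw Hs Hn Hev Hj.
  apply (ex_series_le (V := R_CompleteNormedModule)) with (fun k => w k + z k ^ n * w k).
  - intros k. change (Rabs (z k ^ j * w k) <= w k + z k ^ n * w k).
    rewrite Rabs_mult, (Rabs_pos_eq (w k)) by auto.
    pose proof (pow_le_1_plus n j (z k) Hev Hj). specialize (Hw k). nra.
  - apply (ex_series_plus (V := R_NormedModule)); auto.
Qed.

Definition cdfw (w z : nat -> R) (c : R) : R := Series (fun k => Ind c (z k) * w k) / Series w.
Definition momw (w z : nat -> R) (j : nat) : R := Series (fun k => z k ^ j * w k) / Series w.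

Lemma moment_grid_bound (w z : nat -> R) L N j n :
  0 < L -> (exists k, n = 2 * k)%nat -> (j < n)%nat ->
  (forall k, 0 <= w k) -> ex_series w -> 0 < Series w ->
  ex_series (fun k => z k ^ n * w k) ->
  Rabs (momw w z j - sum_n (fun i => grid L N (S i) ^ j *
          (cdfw w z (grid L N (S i)) - cdfw w z (grid L N i))) N)
  <= INR j * L ^ (j - 1) * hstep L N + momw w z n / L ^ (n - j).
Proof.
  intros HL Hev Hj Hw Hs HW Hn.
  pose (y := fun i => grid L N i ^ j). pose (x := grid L N).
  set (u := fun i k => y (S i) * (Ind (x (S i)) (z k) * w k) - y (S i) * (Ind (x i) (z k) * w k)).
  assert (Hu : forall i, ex_series (u i)).
  { intros i. unfold u. apply (ex_series_minus (V := R_NormedModule));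
    apply (ex_series_scal_l (V := R_NormedModule)); apply ex_series_Ind; auto. }
  assert (Hsum : sum_n (fun i => grid L N (S i) ^ j * (cdfw w z (grid L N (S i)) - cdfw w z (grid L N i))) N
     = Series (fun k => sum_n (fun i => u i k) N) / Series w).
  { rewrite Series_sum_n by auto. unfold Rdiv. rewrite <- sum_n_mult_r_R.
    apply sum_n_ext. intros i. unfold u, cdfw, mult; simpl.
    rewrite Series_minus by (apply (ex_series_scal_l (V := R_NormedModule)); apply ex_series_Ind; auto).
    rewrite !Series_scal_l. unfold y, x. field. lra. }
  assert (Hpsi : forall k, sum_n (fun i => u i k) N = psi y x N (z k) * w k).
  { intros k. unfold psi. rewrite <- sum_n_mult_r_R. apply sum_n_ext. intros i. unfold u, mult; simpl. ring. }
  rewrite Hsum. unfold momw. 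
  assert (Hj' : ex_series (fun k => z k ^ j * w k)) by (apply ex_series_powj with n; auto; lia).
  assert (Hex : ex_series (fun k => sum_n (fun i => u i k) N)) by (apply ex_series_sum_n; auto).
  replace (Series (fun k => z k ^ j * w k) / Series w - Series (fun k => sum_n (fun i => u i k) N) / Series w)
    with (Series (fun k => z k ^ j * w k - sum_n (fun i => u i k) N) / Series w)
    by (rewrite Series_minus by auto; field; lra).
  set (om := INR j * L ^ (j - 1) * hstep L N).
  set (c := / L ^ (n - j)).
  assert (Hc : 0 < c) by (apply Rinv_0_lt_compat, pow_lt; auto).
  assert (Hb : forall k, Rabs (z k ^ j * w k - sum_n (fun i => u i k) N) <= om * w k + c * (z k ^ n * w k)).
  { intros k. rewrite Hpsi. replace (z k ^ j * w k - psi y x N (z k) * w k) with ((z k ^ j - psi y x N (z k)) * w k) by ring.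
    rewrite Rabs_mult, (Rabs_pos_eq (w k)) by auto.
    pose proof (psi_bound L N j n (z k) HL Hev Hj). unfold y, x. fold om in H.
    unfold Rdiv in H. specialize (Hw k). fold c in H. nra. }
  assert (Hexb : ex_series (fun k => om * w k + c * (z k ^ n * w k))).
  { apply (ex_series_plus (V := R_NormedModule)); apply (ex_series_scal_l (V := R_NormedModule)); auto. }
  unfold Rdiv. rewrite Rabs_mult, (Rabs_pos_eq (/ Series w)) by (left; apply Rinv_0_lt_compat; auto).
  apply Rmult_le_reg_r with (Series w); auto. rewrite Rmult_assoc, Rinv_l, Rmult_1_r by lra.
  eapply Rle_trans. apply Series_Rabs.
  { apply (ex_series_le (V := R_CompleteNormedModule)) with (fun k => om * w k + c * (z k ^ n * w k)); auto.
    intros k. change (Rabs (Rabs (z k ^ j * w k - sum_n (fun i => u i k) N)) <= om * w k + c * (z k ^ n * w k)).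
    rewrite Rabs_Rabsolu. auto. }
  eapply Rle_trans. apply Series_le with (b := fun k => om * w k + c * (z k ^ n * w k)); auto.
  intros k; split; auto; apply Rabs_pos.
  rewrite Series_plus, !Series_scal_l by (apply (ex_series_scal_l (V := R_NormedModule)); auto).
  right. fold c. field. lra.
Qed.

Lemma cell_bound j L a b : 0 < L -> - L <= a -> a <= b -> b <= L ->
  Rabs (RInt (fun t => t ^ j * phi t) a b - b ^ j * RInt phi a b)
    <= INR j * L ^ (j - 1) * (b - a) * RInt phi a b.
Proof.
  intros HL Ha Hab Hb.
  set (om := INR j * L ^ (j - 1) * (b - a)).
  assert (E : RInt (fun t => t ^ j * phi t) a b - b ^ j * RInt phi a b
            = RInt (fun t => (t ^ j - b ^ j) * phi t) a b).
  { assert (E1 : b ^ j * RInt phi a b = RInt (fun t => b ^ j * phi t) a b).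
    { symmetry. apply (RInt_scal (V := R_CompleteNormedModule)). apply ex_RInt_phi. }
    rewrite E1. 
    assert (E2 : RInt (fun t => (t ^ j - b ^ j) * phi t) a b = RInt (fun t => minus (t ^ j * phi t) (b ^ j * phi t)) a b).
    { apply RInt_ext. intros. unfold minus, plus, opp; simpl. ring. }
    rewrite E2, (RInt_minus (V := R_CompleteNormedModule)). reflexivity.
    apply ex_RInt_powphi.
    apply (ex_RInt_scal (V := R_NormedModule)). apply ex_RInt_phi. }
  rewrite E.
  assert (Hex : forall g : R -> R, (forall t, continuous g t) -> ex_RInt g a b).
  { intros g Hg. apply (@ex_RInt_continuous R_CompleteNormedModule). intros; apply Hg. }
  eapply Rle_trans. apply abs_RInt_le; auto. apply Hex. intros t. unfold phi. cont_tac.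
  assert (E3 : om * RInt phi a b = RInt (fun t => om * phi t) a b).
  { symmetry. apply (RInt_scal (V := R_CompleteNormedModule)). apply ex_RInt_phi. }
  fold om. rewrite E3. apply RInt_le; auto.
  - apply (ex_RInt_continuous (V := R_CompleteNormedModule)). intros t _.
    apply (continuous_comp (fun t => (t ^ j - b ^ j) * phi t) Rabs).
    unfold phi. cont_tac. apply continuous_Rabs.
  - apply Hex. intros t. unfold phi. cont_tac.
  - intros t Ht. rewrite Rabs_mult, (Rabs_pos_eq (phi t)) by (left; apply phi_pos).
    apply Rmult_le_compat_r. left; apply phi_pos.
    eapply Rle_trans. apply pow_lipschitz with (M := L); apply Rabs_le; lra.
    unfold om. apply Rmult_le_compat_l. apply Rmult_le_pos. apply pos_INR. apply pow_le; lra.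
    rewrite Rabs_left1 by lra. lra.
Qed.

Lemma grid_phi_bound L N j : 0 < L ->
  Rabs (RInt (fun t => t ^ j * phi t) (- L) L
        - sum_n (fun i => grid L N (S i) ^ j * (Phi (grid L N (S i)) - Phi (grid L N i))) N)
  <= INR j * L ^ (j - 1) * hstep L N * RInt phi (- L) L.
Proof.
  intros HL. pose proof (hstep_pos L N HL) as Hh.
  set (om := INR j * L ^ (j - 1) * hstep L N).
  assert (Gen : forall M, (M <= N)%nat ->
    Rabs (RInt (fun t => t ^ j * phi t) (grid L N 0) (grid L N (S M))
        - sum_n (fun i => grid L N (S i) ^ j * (Phi (grid L N (S i)) - Phi (grid L N i))) M)
    <= om * RInt phi (grid L N 0) (grid L N (S M))).
  { induction M as [|M IH]; intros HM.
    - rewrite sum_O_R, Phi_diff. 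
      pose proof (grid_range L N 0 HL ltac:(lia)). pose proof (grid_range L N 1 HL ltac:(lia)).
      pose proof (cell_bound j L (grid L N 0) (grid L N 1) HL ltac:(lra) ltac:(rewrite grid_S; lra) ltac:(lra)).
      replace (grid L N 1 - grid L N 0) with (hstep L N) in H1 by (rewrite grid_S; ring).
      unfold om; exact H1.
    - rewrite sum_Sn_R, Phi_diff.
      pose proof (grid_range L N (S M) HL ltac:(lia)). pose proof (grid_range L N (S (S M)) HL ltac:(lia)).
      pose proof (cell_bound j L (grid L N (S M)) (grid L N (S (S M))) HL ltac:(lra) ltac:(rewrite (grid_S L N (S M)); lra) ltac:(lra)) as Hc.
      replace (grid L N (S (S M)) - grid L N (S M)) with (hstep L N) in Hc by (rewrite (grid_S L N (S M)); ring).
      fold om in Hc. specialize (IH ltac:(lia)).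
      rewrite <- (RInt_Chasles (fun t => t ^ j * phi t) (grid L N 0) (grid L N (S M)) (grid L N (S (S M)))) by apply ex_RInt_powphi.
      rewrite <- (RInt_Chasles phi (grid L N 0) (grid L N (S M)) (grid L N (S (S M)))) by apply ex_RInt_phi.
      change (plus ?p ?q) with (p + q).
      eapply Rle_trans; [|right; symmetry; apply Rmult_plus_distr_l].
      eapply Rle_trans; [|apply Rplus_le_compat; [exact IH| exact Hc]].
      eapply Rle_trans; [|apply Rabs_triang]. right. f_equal. ring. }
  specialize (Gen N (le_n N)). rewrite grid_0, grid_last in Gen. auto.
Qed.

Lemma RInt_phi_le L : 0 < L -> 0 <= RInt phi (- L) L <= 2 * L.
Proof.
  intros HL. destruct (RInt_phi_bound (- L) L ltac:(lra)). split; auto.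
  pose proof (abs_RInt_le_const phi (- L) L 1 ltac:(lra) (ex_RInt_phi _ _)).
  assert (Rabs (RInt phi (- L) L) <= (L - - L) * 1).
  { apply H1. intros t _. rewrite Rabs_pos_eq by (left; apply phi_pos). apply phi_le_1. }
  rewrite Rabs_pos_eq in H2 by auto. lra.
Qed.


Fixpoint fsum (f : nat -> R) (n : nat) : R :=
  match n with O => 0 | S n => fsum f n + f n end.

Lemma fsum_ext f g n : (forall i, (i < n)%nat -> f i = g i) -> fsum f n = fsum g n.
Proof. induction n; intros H; simpl; auto. rewrite IHn, H; auto. Qed.

Lemma fsum_shift f n : fsum f (S n) = f 0%nat + fsum (fun i => f (S i)) n.
Proof. induction n; simpl in *. ring. rewrite IHn. ring. Qed.

Lemma fsum_plus f g n : fsum (fun i => f i + g i) n = fsum f n + fsum g n.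
Proof. induction n; simpl; [ring|rewrite IHn; ring]. Qed.

Lemma fsum_scal c f n : fsum (fun i => c * f i) n = c * fsum f n.
Proof. induction n; simpl; [ring|rewrite IHn; ring]. Qed.

Lemma nat_big X : exists N : nat, X <= INR N.
Proof.
  destruct (Rle_dec 0 X) as [H|H].
  - destruct (nfloor_ex X H) as [n Hn]. exists (S n). rewrite S_INR. lra.
  - exists 0%nat. simpl. lra.
Qed.

Section Filt.
Context {F : (R -> Prop) -> Prop} {FF : Filter F}.

Definition bdd (u : R -> R) := exists M, F (fun s => Rabs (u s) <= M).
Definition t0 (u : R -> R) := forall eps, 0 < eps -> F (fun s => Rabs (u s) <= eps).

Lemma bdd_ext u v : F (fun s => u s = v s) -> bdd u -> bdd v.
Proof.
  intros He [M HM]. exists M. generalize (@filter_and _ F FF _ _ He HM). apply filter_imp.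
  intros s [E H]. rewrite <- E; auto.
Qed.

Lemma t0_ext u v : F (fun s => u s = v s) -> t0 u -> t0 v.
Proof.
  intros He H eps Heps. generalize (@filter_and _ F FF _ _ He (H eps Heps)). apply filter_imp.
  intros s [E H']. rewrite <- E; auto.
Qed.

Lemma bdd_const c : bdd (fun _ => c).
Proof. exists (Rabs c). apply filter_forall. intros; lra. Qed.

Lemma bdd_mult u v : bdd u -> bdd v -> bdd (fun s => u s * v s).
Proof.
  intros [M1 H1] [M2 H2]. exists (M1 * M2). generalize (@filter_and _ F FF _ _ H1 H2). apply filter_imp.
  intros s [A1 A2]. rewrite Rabs_mult. apply Rmult_le_compat; auto using Rabs_pos.
Qed.

Lemma bdd_plus u v : bdd u -> bdd v -> bdd (fun s => u s + v s).
Proof.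
  intros [M1 H1] [M2 H2]. exists (M1 + M2). generalize (@filter_and _ F FF _ _ H1 H2). apply filter_imp.
  intros s [A1 A2]. eapply Rle_trans. apply Rabs_triang. lra.
Qed.

Lemma bdd_fsum (f : nat -> R -> R) n : (forall i, (i < n)%nat -> bdd (f i)) -> bdd (fun s => fsum (fun i => f i s) n).
Proof.
  induction n; intros H; simpl.
  - apply bdd_const.
  - apply bdd_plus. apply IHn. intros; apply H; lia. apply H; lia.
Qed.

Lemma t0_mult u v : bdd u -> t0 v -> t0 (fun s => u s * v s).
Proof.
  intros [M H1] H2 eps Heps.
  assert (HM : 0 < Rabs M + 1) by (pose proof (Rabs_pos M); lra).
  generalize (@filter_and _ F FF _ _ H1 (H2 (eps / (Rabs M + 1)) ltac:(apply Rdiv_lt_0_compat; lra))).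
  apply filter_imp. intros s [A1 A2]. rewrite Rabs_mult.
  apply Rle_trans with ((Rabs M + 1) * (eps / (Rabs M + 1))).
  apply Rmult_le_compat; auto using Rabs_pos. pose proof (Rle_abs M); lra.
  right. field. lra.
Qed.

Lemma t0_plus u v : t0 u -> t0 v -> t0 (fun s => u s + v s).
Proof.
  intros H1 H2 eps Heps.
  generalize (@filter_and _ F FF _ _ (H1 (eps/2) ltac:(lra)) (H2 (eps/2) ltac:(lra))). apply filter_imp.
  intros s [A1 A2]. eapply Rle_trans. apply Rabs_triang. lra.
Qed.

Lemma t0_fsum (f : nat -> R -> R) n : (forall i, (i < n)%nat -> t0 (f i)) -> t0 (fun s => fsum (fun i => f i s) n).
Proof.
  induction n; intros H; simpl.
  - intros eps Heps. apply filter_forall. intros; rewrite Rabs_R0; lra.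
  - apply t0_plus. apply IHn. intros; apply H; lia. apply H; lia.
Qed.

Lemma t0_filterlim u : t0 u -> filterlim u F (locally 0).
Proof.
  intros H. apply filterlim_locally. intros eps.
  generalize (H (eps / 2) ltac:(pose proof (cond_pos eps); lra)). apply filter_imp.
  intros s Hs. change (Rabs (u s - 0) < eps). rewrite Rminus_0_r. pose proof (cond_pos eps). lra.
Qed.

Lemma filter_forall_le (P : nat -> R -> Prop) N : (forall i, (i <= N)%nat -> F (P i)) ->
  F (fun s => forall i, (i <= N)%nat -> P i s).
Proof.
  induction N; intros H.
  - generalize (H 0%nat (le_n 0)). apply filter_imp. intros s Hs i Hi.
    replace i with 0%nat by lia. auto.
  - generalize (@filter_and _ F FF _ _ (IHN (fun i Hi => H i ltac:(lia))) (H (S N) (le_n _))).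
    apply filter_imp. intros s [A1 A2] i Hi. destruct (Nat.eq_dec i (S N)). subst; auto. apply A1; lia.
Qed.

End Filt.

Lemma C_n_1 n : Binomial.C (S n) 1 = INR (S n).
Proof.
  rewrite (pascal_step3 (S n) 0) by lia. rewrite C_n_0. simpl. replace (n - 0)%nat with n by lia.
  rewrite <- S_INR. simpl. field.
Qed.

Lemma C_n_pred n : Binomial.C (S n) n = INR (S n).
Proof. rewrite pascal_step1 by lia. replace (S n - n)%nat with 1%nat by lia. destruct n. unfold Binomial.C; simpl; field. apply C_n_1. Qed.

Lemma pow_ge_L L k : 1 <= L -> (1 <= k)%nat -> L <= L ^ k.
Proof.
  intros HL Hk. destruct k. lia. simpl. pose proof (pow_R1_Rle L k HL). nra.
Qed.

Lemma div_pow_le x L k : 0 <= x -> 1 <= L -> (1 <= k)%nat -> x / L ^ k <= x / L.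
Proof.
  intros Hx HL Hk. unfold Rdiv. apply Rmult_le_compat_l; auto.
  apply Rinv_le_contravar. lra. apply pow_ge_L; auto.
Qed.

Lemma final_abstract (F : (R -> Prop) -> Prop) (FF : Filter F) (ch kc : nat -> R -> R) (n : nat) :
  (exists k, n = 2 * k)%nat -> (4 <= n)%nat ->
  F (fun s => ch 0%nat s = 1 /\ kc 1%nat s = 0 /\ kc 2%nat s = 1 /\
       forall r, (r < n)%nat -> ch (S r) s = fsum (fun i => Binomial.C r i * ch i s * kc (S r - i)%nat s) (S r)) ->
  (forall m, (3 <= m <= n)%nat -> bdd (F := F) (kc m)) ->
  (forall j L eps, (j < n)%nat -> 1 <= L -> 0 < eps ->
     F (fun s => Rabs (ch j s - RInt (fun t => t ^ j * phi t) (- L) L) <= Rabs (ch n s) / L ^ (n - j) + eps)) ->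
  forall j, (3 <= j < n)%nat -> filterlim (kc j) F (locally 0).
Proof.
  intros Hev Hn4 Hrec Hkb Hmom.
  assert (Hkb' : forall m, (1 <= m <= n)%nat -> bdd (F := F) (kc m)).
  { intros m Hm. destruct (Compare_dec.le_lt_dec 3 m). apply Hkb; lia.
    destruct (Nat.eq_dec m 1) as [->|]. 
    - apply (bdd_ext (fun _ => 0)). generalize Hrec. apply filter_imp. intros s (_&H&_); auto. apply bdd_const.
    - replace m with 2%nat by lia. apply (bdd_ext (fun _ => 1)). generalize Hrec. apply filter_imp. intros s (_&_&H&_); auto. apply bdd_const. }
  assert (Hcb : forall r, (r <= n)%nat -> forall i, (i <= r)%nat -> bdd (F := F) (ch i)).
  { induction r; intros Hr i Hi.
    - replace i with 0%nat by lia. apply (bdd_ext (fun _ => 1)). generalize Hrec. apply filter_imp. intros s (H&_); auto. apply bdd_const.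
    - destruct (Nat.eq_dec i (S r)); [|apply IHr; lia]. subst i.
      apply (bdd_ext (fun s => fsum (fun i => Binomial.C r i * ch i s * kc (S r - i)%nat s) (S r))).
      generalize Hrec. apply filter_imp. intros s (_&_&_&H). symmetry; apply H; lia.
      apply bdd_fsum. intros i Hi2. apply bdd_mult. apply bdd_mult. apply bdd_const. apply IHr; lia.
      apply Hkb'. lia. }
  destruct (Hcb n (le_n n) n (le_n n)) as [B HB].
  assert (Step : forall q, (q + 3 < n)%nat -> (forall m, (3 <= m <= q + 2)%nat -> t0 (F := F) (kc m)) ->
                  t0 (F := F) (kc (q + 3)%nat)).
  { intros q Hq IH.
    set (D := fun s => (ch (q + 3)%nat s - INR (q + 2) * ch (q + 1)%nat s)
                 - fsum (fun i => Binomial.C (q + 2) (S i) * ch (S i) s * kc (q + 2 - i)%nat s) q).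
    apply (t0_ext D).
    { generalize Hrec. apply filter_imp. intros s (H0 & H1 & H2 & Hr).
      unfold D. replace (ch (q + 3)%nat s) with (ch (S (q + 2)) s) by (f_equal; lia).
      rewrite (Hr (q + 2)%nat) by lia.
      replace (S (q + 2)) with (S (S (S q))) by lia.
      change (fsum ?g (S (S (S q)))) with (fsum g (S q) + g (S q) + g (S (S q))).
      rewrite fsum_shift.
      rewrite (fsum_ext (fun i => Binomial.C (q + 2) (S i) * ch (S i) s * kc (S (S (S q)) - S i)%nat s)
                 (fun i => Binomial.C (q + 2) (S i) * ch (S i) s * kc (q + 2 - i)%nat s) q)
        by (intros; do 2 f_equal; lia).
      replace (S (S (S q)) - 0)%nat with (q + 3)%nat by lia.
      replace (S (S (S q)) - S q)%nat with 2%nat by lia.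
      replace (S (S (S q)) - S (S q))%nat with 1%nat by lia.
      replace (S q) with (q + 1)%nat by lia.
      rewrite H0, H1, H2, C_n_0.
      replace (Binomial.C (q + 2) (q + 1)) with (INR (q + 2))
        by (replace (q + 2)%nat with (S (q + 1)) by lia; rewrite C_n_pred; auto).
      ring. }
    unfold D. apply (t0_plus (F := F)).
    2: { apply (t0_ext (fun s => (-1) * fsum (fun i => Binomial.C (q + 2) (S i) * ch (S i) s * kc (q + 2 - i)%nat s) q)).
         apply filter_forall. intros; ring.
         apply t0_mult. apply bdd_const. apply t0_fsum. intros i Hi. apply t0_mult.
         apply bdd_mult. apply bdd_const. apply (Hcb n); lia. apply IH; lia. }
    intros eps Heps.
    set (K := INR (q + 3)).
    assert (HK : 1 <= K) by (unfold K; replace (q+3)%nat with (S (q+2)) by lia; rewrite S_INR; pose proof (pos_INR (q+2)); lra).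
    destruct (phi_boundary_small (q + 1) (eps / 3) ltac:(lra)) as [L0 [HL0 HL0b]].
    set (L := Rmax L0 (3 * K * (Rabs B + 1) / eps)).
    assert (HL1 : 1 <= L) by (eapply Rle_trans; [exact HL0|apply Rmax_l]).
    assert (HLb : 3 * K * (Rabs B + 1) / eps <= L) by apply Rmax_r.
    set (e1 := eps / (3 * K)).
    assert (He1 : 0 < e1) by (unfold e1; apply Rdiv_lt_0_compat; lra).
    generalize (@filter_and _ F FF _ _ HB (@filter_and _ F FF _ _ (Hmom (q + 3)%nat L e1 ltac:(lia) HL1 He1)
                    (Hmom (q + 1)%nat L e1 ltac:(lia) HL1 He1))).
    apply filter_imp. intros s [Hs [M1 M2]].
    pose proof (IBP_phi (q + 1) (- L) L) as Hibp.
    replace (q + 1 + 2)%nat with (q + 3)%nat in Hibp by lia.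
    replace (q + 1 + 1)%nat with (q + 2)%nat in Hibp by lia.
    specialize (HL0b L (Rmax_l _ _)).
    replace (q + 1 + 1)%nat with (q + 2)%nat in HL0b by lia.
    assert (HBn : 0 <= Rabs (ch n s)) by apply Rabs_pos.
    assert (T1 : Rabs (ch n s) / L ^ (n - (q + 3)) <= Rabs B / L).
    { eapply Rle_trans. apply div_pow_le; auto; lia. unfold Rdiv. apply Rmult_le_compat_r.
      left; apply Rinv_0_lt_compat; lra. pose proof (Rle_abs B); lra. }
    assert (T2 : Rabs (ch n s) / L ^ (n - (q + 1)) <= Rabs B / L).
    { eapply Rle_trans. apply div_pow_le; auto; lia. unfold Rdiv. apply Rmult_le_compat_r.
      left; apply Rinv_0_lt_compat; lra. pose proof (Rle_abs B); lra. }
    assert (T3 : K * (Rabs B / L) <= eps / 3).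
    { apply Rmult_le_reg_r with (3 * L / eps). apply Rdiv_lt_0_compat; lra.
      replace (eps / 3 * (3 * L / eps)) with L by (field; lra).
      replace (K * (Rabs B / L) * (3 * L / eps)) with (3 * K * Rabs B / eps) by (field; lra).
      eapply Rle_trans; [|exact HLb]. unfold Rdiv. apply Rmult_le_compat_r. left; apply Rinv_0_lt_compat; lra.
      lra. }
    assert (T4 : K * e1 = eps / 3) by (unfold e1; field; lra).
    assert (HKq : K = INR (q + 2) + 1) by (unfold K; replace (q+3)%nat with (S (q+2)) by lia; rewrite S_INR; auto).
    set (I3 := RInt (fun t => t ^ (q + 3) * phi t) (- L) L) in *.
    set (I1 := RInt (fun t => t ^ (q + 1) * phi t) (- L) L) in *.
    set (bd := L ^ (q + 2) * phi L - (- L) ^ (q + 2) * phi (- L)) in *.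
    replace (ch (q + 3)%nat s - INR (q + 2) * ch (q + 1)%nat s)
      with ((ch (q + 3)%nat s - I3) - INR (q + 2) * (ch (q + 1)%nat s - I1) - bd) by (rewrite Hibp; ring).
    set (X := ch (q + 3)%nat s - I3) in *. set (Y := ch (q + 1)%nat s - I1) in *.
    assert (A1 : Rabs (X - INR (q + 2) * Y - bd) <= Rabs X + INR (q + 2) * Rabs Y + Rabs bd).
    { unfold Rminus. eapply Rle_trans. apply Rabs_triang. rewrite Rabs_Ropp. apply Rplus_le_compat_r.
      eapply Rle_trans. apply Rabs_triang. rewrite Rabs_Ropp, Rabs_mult, (Rabs_pos_eq (INR _)) by apply pos_INR. lra. }
    pose proof (pos_INR (q + 2)) as Hq2.
    assert (A2 : INR (q + 2) * Rabs Y <= INR (q + 2) * (Rabs B / L + e1)).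
    { apply Rmult_le_compat_l; lra. }
    assert (A3 : K * (Rabs B / L + e1) <= 2 * eps / 3) by (rewrite Rmult_plus_distr_l; lra).
    rewrite HKq in A3. 
    assert (A4 : Rabs X <= Rabs B / L + e1) by lra.
    lra. }

  intros j Hj. apply t0_filterlim.
  replace j with ((j - 3) + 3)%nat by lia.
  assert (Main : forall q, (q + 3 < n)%nat -> forall m, (3 <= m <= q + 3)%nat -> t0 (F := F) (kc m)).
  { induction q; intros Hq m Hm.
    - replace m with (0 + 3)%nat by lia. apply Step; auto. intros; lia.
    - destruct (Nat.eq_dec m (S q + 3)); [|apply IHq; lia]. subst m.
      apply Step; auto. intros m Hm'. apply IHq; lia. }
  apply (Main (j - 3)%nat); lia.
Qed.

Lemma sum_n_diff_bound (f g : nat -> R) N b : (forall i, (i <= N)%nat -> Rabs (f i - g i) <= b) ->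
  Rabs (sum_n f N - sum_n g N) <= INR (S N) * b.
Proof.
  induction N; intros H.
  - rewrite !sum_O_R. simpl. specialize (H 0%nat (le_n _)). lra.
  - rewrite !sum_Sn_R. rewrite S_INR.
    replace (sum_n f N + f (S N) - (sum_n g N + g (S N))) with ((sum_n f N - sum_n g N) + (f (S N) - g (S N))) by ring.
    eapply Rle_trans. apply Rabs_triang. specialize (IHN (fun i Hi => H i ltac:(lia))). specialize (H (S N) (le_n _)).
    lra.
Qed.

Lemma mom_conv (F : (R -> Prop) -> Prop) (FF : Filter F) (w z : R -> nat -> R) (n j : nat) (L eps : R) :
  (exists k, n = 2 * k)%nat -> (j < n)%nat -> 1 <= L -> 0 < eps ->
  F (fun s => (forall k, 0 <= w s k) /\ ex_series (w s) /\ 0 < Series (w s) /\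
              ex_series (fun k => z s k ^ n * w s k)) ->
  (forall x, filterlim (fun s => cdfw (w s) (z s) x) F (locally (Phi x))) ->
  F (fun s => Rabs (momw (w s) (z s) j - RInt (fun t => t ^ j * phi t) (- L) L)
               <= Rabs (momw (w s) (z s) n) / L ^ (n - j) + eps).
Proof.
  intros Hev Hj HL Heps Hw Hcdf.
  set (A := INR j * L ^ (j - 1) * 2 * L * (1 + 2 * L)).
  assert (HA : 0 <= A).
  { unfold A. pose proof (pos_INR j). pose proof (pow_le L (j - 1) ltac:(lra)).
    apply Rmult_le_pos; [|lra]. apply Rmult_le_pos; [|lra]. apply Rmult_le_pos; [|lra]. apply Rmult_le_pos; lra. }
  destruct (nat_big (2 * A / eps)) as [N HN].
  assert (HSN : 0 < INR (S N)) by (apply lt_0_INR; lia).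
  assert (HSN' : 2 * A / eps <= INR (S N)) by (rewrite S_INR; lra).
  set (om := INR j * L ^ (j - 1) * hstep L N).
  assert (Hom : om * (1 + 2 * L) <= eps / 2).
  { unfold om, hstep. replace (INR j * L ^ (j - 1) * (2 * L / INR (S N)) * (1 + 2 * L)) with (A / INR (S N))
      by (unfold A; field; lra).
    apply Rmult_le_reg_r with (INR (S N)); auto. unfold Rdiv at 1. rewrite Rmult_assoc, Rinv_l, Rmult_1_r by lra.
    apply Rmult_le_reg_r with (2 / eps). apply Rdiv_lt_0_compat; lra.
    replace (eps / 2 * INR (S N) * (2 / eps)) with (INR (S N)) by (field; lra).
    replace (A * (2 / eps)) with (2 * A / eps) by (field; lra). auto. }
  assert (Hom0 : 0 <= om).
  { unfold om. pose proof (hstep_pos L N ltac:(lra)). pose proof (pos_INR j). pose proof (pow_le L (j - 1) ltac:(lra)).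
    apply Rmult_le_pos; [apply Rmult_le_pos|]; lra. }
  set (Lj := L ^ j).
  assert (HLj : 0 <= Lj) by (apply pow_le; lra).
  set (delta := eps / (4 * INR (S N) * (Lj + 1))).
  assert (Hdelta : 0 < delta) by (unfold delta; apply Rdiv_lt_0_compat; [lra|]; apply Rmult_lt_0_compat; lra).
  assert (Hall : F (fun s => forall i, (i <= S N)%nat ->
              Rabs (cdfw (w s) (z s) (grid L N i) - Phi (grid L N i)) <= delta)).
  { apply filter_forall_le. intros i _.
    generalize (proj1 (filterlim_locally _ _) (Hcdf (grid L N i)) (mkposreal delta Hdelta)).
    apply filter_imp. intros s Hs. left.
    change (Rabs (cdfw (w s) (z s) (grid L N i) - Phi (grid L N i)) < delta) in Hs. exact Hs. }
  generalize (@filter_and _ F FF _ _ Hw Hall). apply filter_imp.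
  intros s [[Hw0 [Hws [HW Hn]]] Hs].
  pose proof (moment_grid_bound (w s) (z s) L N j n ltac:(lra) Hev Hj Hw0 Hws HW Hn) as M1.
  pose proof (grid_phi_bound L N j ltac:(lra)) as M2. fold om in M1, M2.
  pose proof (RInt_phi_le L ltac:(lra)) as M3.
  set (Sc := sum_n (fun i => grid L N (S i) ^ j * (cdfw (w s) (z s) (grid L N (S i)) - cdfw (w s) (z s) (grid L N i))) N) in *.
  set (Sp := sum_n (fun i => grid L N (S i) ^ j * (Phi (grid L N (S i)) - Phi (grid L N i))) N) in *.
  assert (M4 : Rabs (Sc - Sp) <= INR (S N) * (Lj * (2 * delta))).
  { apply sum_n_diff_bound. intros i Hi.
    rewrite <- Rmult_minus_distr_l, Rabs_mult. apply Rmult_le_compat; try apply Rabs_pos.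
    - rewrite <- RPow_abs. apply pow_incr. split. apply Rabs_pos. apply Rabs_le. apply grid_range; lia || lra.
    - replace (cdfw (w s) (z s) (grid L N (S i)) - cdfw (w s) (z s) (grid L N i) - (Phi (grid L N (S i)) - Phi (grid L N i)))
        with ((cdfw (w s) (z s) (grid L N (S i)) - Phi (grid L N (S i))) - (cdfw (w s) (z s) (grid L N i) - Phi (grid L N i))) by ring.
      eapply Rle_trans. apply Rabs_triang. rewrite Rabs_Ropp.
      pose proof (Hs (S i) ltac:(lia)). pose proof (Hs i ltac:(lia)). lra. }
  assert (M5 : INR (S N) * (Lj * (2 * delta)) <= eps / 2).
  { unfold delta. replace (INR (S N) * (Lj * (2 * (eps / (4 * INR (S N) * (Lj + 1)))))) with (eps / 2 * (Lj / (Lj + 1)))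
      by (field; lra).
    rewrite <- (Rmult_1_r (eps / 2)) at 2. apply Rmult_le_compat_l. lra.
    apply Rmult_le_reg_r with (Lj + 1). lra. unfold Rdiv. rewrite Rmult_assoc, Rinv_l by lra. lra. }
  assert (M6 : momw (w s) (z s) n / L ^ (n - j) <= Rabs (momw (w s) (z s) n) / L ^ (n - j)).
  { unfold Rdiv. apply Rmult_le_compat_r. left; apply Rinv_0_lt_compat, pow_lt; lra. apply Rle_abs. }
  set (I := RInt (fun t => t ^ j * phi t) (- L) L) in *.
  set (mj := momw (w s) (z s) j) in *.
  replace (mj - I) with ((mj - Sc) + (Sc - Sp) - (I - Sp)) by ring.
  eapply Rle_trans. apply Rabs_triang. rewrite Rabs_Ropp.
  eapply Rle_trans. apply Rplus_le_compat_r. apply Rabs_triang.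
  assert (om * RInt phi (- L) L <= om * (2 * L)) by (apply Rmult_le_compat_l; lra).
  lra.
Qed.


Lemma is_derive_mult_R (f g : R -> R) x df dg : is_derive f x df -> is_derive g x dg ->
  is_derive (fun y => f y * g y) x (df * g x + f x * dg).
Proof. intros H1 H2. apply (is_derive_mult (K := R_AbsRing) f g x df dg H1 H2). intros; apply Rmult_comm. Qed.

Lemma is_derive_comp_R (f g : R -> R) x df dg : is_derive f (g x) df -> is_derive g x dg ->
  is_derive (fun y => f (g y)) x (dg * df).
Proof. intros H1 H2. apply (is_derive_comp (K := R_AbsRing) (V := R_NormedModule) f g x df dg H1 H2). Qed.

Definition bc (a : nat -> R) (c : R) (r : nat) : nat -> R := fun k => (INR k - c) ^ r * a k.
Definition Dom (a : nat -> R) (s : R) : Prop := Rbar_lt (Rabs (exp s)) (CV_radius a).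
Definition U (a : nat -> R) (c : R) (r : nat) (s : R) : R := PSeries (bc a c r) (exp s).
Definition T (a : nat -> R) (c : R) (r : nat) (s : R) : R := U a c r s * exp (- (c * s)).
Definition G (a : nat -> R) (c : R) (s : R) : R := ln (T a c 0 s).
Definition K (a : nat -> R) (c : R) (m : nat) (s : R) : R := Derive_n (G a c) m s.

Lemma Rbar_le_min x y z : Rbar_le x y -> Rbar_le x z -> Rbar_le x (Rbar_min y z).
Proof.
  intros H1 H2. destruct y, z; simpl in *; auto.
  unfold Rmin. destruct (Rle_dec r r0); auto.
Qed.

Lemma bc_S a c r k : bc a c (S r) k = PS_plus (PS_incr_1 (PS_derive (bc a c r))) (PS_scal (- c) (bc a c r)) k.
Proof.
  unfold PS_plus, PS_scal, PS_incr_1, PS_derive, bc. destruct k.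
  - change (plus zero (scal (- c) ((INR 0 - c) ^ r * a 0%nat))) with (0 + (- c) * ((INR 0 - c) ^ r * a 0%nat)).
    simpl. ring.
  - change (plus (INR (S k) * ((INR (S k) - c) ^ r * a (S k))) (scal (- c) ((INR (S k) - c) ^ r * a (S k))))
      with (INR (S k) * ((INR (S k) - c) ^ r * a (S k)) + (- c) * ((INR (S k) - c) ^ r * a (S k))).
    simpl. ring.
Qed.

Lemma radius_bc a c r : Rbar_le (CV_radius a) (CV_radius (bc a c r)).
Proof.
  induction r.
  - rewrite (CV_radius_ext (bc a c 0) a). apply Rbar_le_refl. intros k; unfold bc; simpl; ring.
  - rewrite (CV_radius_ext _ _ (bc_S a c r)).
    eapply Rbar_le_trans; [|apply CV_radius_plus].
    apply Rbar_le_min.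
    + rewrite CV_radius_incr_1, CV_radius_derive. auto.
    + destruct (Req_dec c 0) as [Hc|Hc].
      * rewrite (CV_radius_ext (PS_scal (- c) (bc a c r)) (fun _ => 0)).
        { rewrite CV_radius_const_0. destruct (CV_radius a); simpl; auto. }
        intros k. unfold PS_scal. rewrite Hc. change (scal (- 0) (bc a 0 r k)) with (- 0 * bc a 0 r k). ring.
      * rewrite CV_radius_scal. auto. lra.
Qed.

Lemma Dom_bc a c r s : Dom a s -> Rbar_lt (Rabs (exp s)) (CV_radius (bc a c r)).
Proof. intros H. eapply Rbar_lt_le_trans. exact H. apply radius_bc. Qed.

Lemma Dom_open a s : Dom a s -> locally s (Dom a).
Proof.
  unfold Dom. intros H. destruct (CV_radius a) as [r| |] eqn:E; simpl in *.
  - rewrite Rabs_pos_eq in H by (left; apply exp_pos).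
    assert (Hc : filterlim exp (locally s) (locally (exp s))) by apply continuous_exp.
    specialize (Hc _ (open_lt r (exp s) H)). unfold filtermap in Hc. generalize Hc. apply filter_imp.
    intros u Hu. rewrite Rabs_pos_eq by (left; apply exp_pos). auto.
  - apply filter_forall. auto.
  - contradiction.
Qed.

Lemma U_derive a c r s : Dom a s -> is_derive (U a c r) s (U a c (S r) s + c * U a c r s).
Proof.
  intros HD. pose proof (Dom_bc a c r s HD) as H1.
  assert (H2 := is_derive_comp_R (PSeries (bc a c r)) exp s _ _ (is_derive_PSeries _ _ H1) (is_derive_exp s)).
  unfold U. replace (PSeries (bc a c (S r)) (exp s) + c * PSeries (bc a c r) (exp s))
    with (exp s * PSeries (PS_derive (bc a c r)) (exp s)). exact H2.
  rewrite <- PSeries_incr_1. rewrite <- PSeries_scal, <- PSeries_plus.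
  - apply PSeries_ext. intros k. unfold PS_plus, PS_scal, PS_incr_1, PS_derive, bc.
    destruct k; change plus with Rplus; change scal with Rmult; simpl; change zero with 0; ring.
  - apply CV_radius_inside. apply Dom_bc; auto.
  - apply ex_pseries_scal. intros; apply Rmult_comm. apply CV_radius_inside. auto.
Qed.

Lemma Series_nonneg (u : nat -> R) : (forall k, 0 <= u k) -> ex_series u -> 0 <= Series u.
Proof.
  intros H Hs. replace 0 with (Series (fun k => 0 * u k)).
  apply Series_le; auto. intros; split; [lra|]. rewrite Rmult_0_l; auto.
  rewrite Series_scal_l. ring.
Qed.

Lemma Series_ge_term (u : nat -> R) k : (forall k, 0 <= u k) -> ex_series u -> u k <= Series u.
Proof.
  intros H Hs. rewrite (Series_incr_n u (S k)) by (lia || auto). simpl Init.Nat.pred.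
  pose proof (sum_f_R0_ge_last u k H).
  assert (0 <= Series (fun i => u (S k + i)%nat)).
  { apply Series_nonneg. auto. apply (ex_series_incr_n u (S k)). auto. }
  lra.
Qed.

Lemma ex_series_bc a c r s : Dom a s -> ex_series (fun k => bc a c r k * exp s ^ k).
Proof.
  intros HD. apply ex_series_Rabs. apply CV_disk_inside. apply Dom_bc; auto.
Qed.

Lemma T_derive a c r s : Dom a s -> is_derive (T a c r) s (T a c (S r) s).
Proof.
  intros HD. unfold T.
  assert (He : is_derive (fun y => exp (- (c * y))) s (- c * exp (- (c * s)))).
  { auto_derive; auto. ring. }
  pose proof (is_derive_mult_R _ _ s _ _ (U_derive a c r s HD) He) as H.
  replace (U a c (S r) s * exp (- (c * s))) with
    ((U a c (S r) s + c * U a c r s) * exp (- (c * s)) + U a c r s * (- c * exp (- (c * s)))) by ring.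
  exact H.
Qed.

Lemma is_derive_plus_R (f g : R -> R) x df dg : is_derive f x df -> is_derive g x dg ->
  is_derive (fun y => f y + g y) x (df + dg).
Proof. intros; apply (is_derive_plus (K := R_AbsRing) (V := R_NormedModule)); auto. Qed.

Lemma is_derive_minus_R (f g : R -> R) x df dg : is_derive f x df -> is_derive g x dg ->
  is_derive (fun y => f y - g y) x (df - dg).
Proof. intros; apply (is_derive_minus (K := R_AbsRing) (V := R_NormedModule)); auto. Qed.

Lemma is_derive_const_R (c x : R) : is_derive (fun _ => c) x 0.
Proof. apply (is_derive_const (K := R_AbsRing) (V := R_NormedModule)). Qed.

Lemma is_derive_fsum (f : nat -> R -> R) (df : nat -> R) n s :
  (forall i, (i < n)%nat -> is_derive (f i) s (df i)) ->
  is_derive (fun u => fsum (fun i => f i u) n) s (fsum df n).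
Proof.
  induction n; intros H; simpl.
  - apply is_derive_const_R.
  - apply is_derive_plus_R. apply IHn; intros; apply H; lia. apply H; lia.
Qed.

Lemma ex_derive_fsum (f : nat -> R -> R) n s :
  (forall i, (i < n)%nat -> ex_derive (f i) s) ->
  ex_derive (fun u => fsum (fun i => f i u) n) s.
Proof.
  intros H. exists (fsum (fun i => Derive (f i) s) n). apply is_derive_fsum.
  intros i Hi. apply Derive_correct. apply H; auto.
Qed.

Lemma pascal_fsum (A : nat -> R) r :
  fsum (fun i => Binomial.C r i * (A (S i) + A i)) (S r) = fsum (fun i => Binomial.C (S r) i * A i) (S (S r)).
Proof.
  replace (fsum (fun i => Binomial.C r i * (A (S i) + A i)) (S r))
    with (fsum (fun i => Binomial.C r i * A (S i)) (S r) + fsum (fun i => Binomial.C r i * A i) (S r))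
    by (rewrite <- fsum_plus; apply fsum_ext; intros; ring).
  rewrite (fsum_shift (fun i => Binomial.C r i * A i)).
  rewrite (fsum_shift (fun i => Binomial.C (S r) i * A i)).
  change (fsum (fun i => Binomial.C r i * A (S i)) (S r)) with
    (fsum (fun i => Binomial.C r i * A (S i)) r + Binomial.C r r * A (S r)).
  change (fsum (fun i => Binomial.C (S r) (S i) * A (S i)) (S r)) with
    (fsum (fun i => Binomial.C (S r) (S i) * A (S i)) r + Binomial.C (S r) (S r) * A (S r)).
  rewrite !C_n_0, !C_n_n.
  rewrite (fsum_ext (fun i => Binomial.C (S r) (S i) * A (S i))
                    (fun i => Binomial.C r i * A (S i) + Binomial.C r (S i) * A (S i)) r).
  rewrite fsum_plus. ring.
  intros i Hi. rewrite <- pascal by auto. ring.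
Qed.

Lemma T0_pos a c s : (forall k, 0 <= a k) -> 0 < a 0%nat -> Dom a s -> 0 < T a c 0 s.
Proof.
  intros Hp H0 HD. unfold T. apply Rmult_lt_0_compat; [|apply exp_pos].
  unfold U, PSeries. eapply Rlt_le_trans; [|apply (Series_ge_term _ 0%nat)].
  - unfold bc. simpl. lra.
  - intros k. unfold bc. simpl. rewrite Rmult_1_l. apply Rmult_le_pos; auto. apply pow_le. left; apply exp_pos.
  - apply ex_series_bc; auto.
Qed.

Lemma G_derive a c s : (forall k, 0 <= a k) -> 0 < a 0%nat -> Dom a s ->
  is_derive (G a c) s (T a c 1 s / T a c 0 s).
Proof.
  intros Hp H0 HD. unfold G.
  pose proof (is_derive_comp_R ln (T a c 0) s _ _ (is_derive_ln _ (T0_pos a c s Hp H0 HD)) (T_derive a c 0 s HD)).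
  replace (T a c 1 s / T a c 0 s) with (T a c 1 s * / T a c 0 s) by reflexivity. exact H.
Qed.

Definition RecP a c r := forall s, Dom a s ->
  T a c (S r) s = fsum (fun i => Binomial.C r i * T a c i s * K a c (S r - i) s) (S r).
Definition DerP a c r := forall s, Dom a s -> forall m, (m <= r)%nat -> ex_derive (K a c m) s.

Lemma K_S a c m s : K a c (S m) s = Derive (K a c m) s.
Proof. reflexivity. Qed.

Lemma main_ind a c (Hp : forall k, 0 <= a k) (H0 : 0 < a 0%nat) : forall r, DerP a c r /\ RecP a c r.
Proof.
  induction r as [|r [IHd IHr]].
  - split.
    + intros s HD m Hm. replace m with 0%nat by lia. exists (T a c 1 s / T a c 0 s).
      apply G_derive; auto.
    + intros s HD. simpl. rewrite C_n_0.
      rewrite K_S. change (K a c 0 ) with (G a c).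
      rewrite (is_derive_unique _ _ _ (G_derive a c s Hp H0 HD)).
      field. apply Rgt_not_eq, T0_pos; auto.
  - assert (HK : forall s, Dom a s -> locally s (fun u => K a c (S r) u =
        (T a c (S r) u - fsum (fun i => Binomial.C r (S i) * T a c (S i) u * K a c (r - i) u) r) / T a c 0 u)).
    { intros s HD. generalize (Dom_open a s HD). apply filter_imp. intros u Hu.
      rewrite (IHr u Hu). rewrite fsum_shift. simpl (S r - _)%nat. rewrite C_n_0.
      field. apply Rgt_not_eq, T0_pos; auto. }
    assert (Hd : DerP a c (S r)).
    { intros s HD m Hm. destruct (Nat.eq_dec m (S r)); [|apply IHd; auto; lia]. subst m.
      eapply ex_derive_ext_loc.
      { generalize (HK s HD). apply filter_imp. intros u Hu. symmetry. exact Hu. }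
      apply ex_derive_div.
      - apply (ex_derive_minus (K := R_AbsRing) (V := R_NormedModule)).
        exists (T a c (S (S r)) s); apply T_derive; auto.
        apply ex_derive_fsum. intros i Hi. apply ex_derive_mult. apply ex_derive_scal.
        exists (T a c (S (S i)) s); apply T_derive; auto. apply IHd; auto; lia.
      - exists (T a c 1 s); apply T_derive; auto.
      - apply Rgt_not_eq, T0_pos; auto. }
    split; auto.
    intros s HD.
    rewrite <- (is_derive_unique _ _ _ (T_derive a c (S r) s HD)).
    rewrite (Derive_ext_loc (T a c (S r)) (fun u => fsum (fun i => Binomial.C r i * T a c i u * K a c (S r - i) u) (S r))).
    2: { generalize (Dom_open a s HD). apply filter_imp. intros u Hu. apply IHr; auto. }
    assert (Hterm : forall i, (i < S r)%nat -> is_derive (fun u => Binomial.C r i * T a c i u * K a c (S r - i) u) s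
        (Binomial.C r i * (T a c (S i) s * K a c (S r - i) s + T a c i s * K a c (S (S r - i)) s))).
    { intros i Hi.
      assert (HKd : is_derive (K a c (S r - i)) s (K a c (S (S r - i)) s)).
      { rewrite K_S. apply Derive_correct. apply Hd; auto; lia. }
      pose proof (is_derive_mult_R _ _ s _ _ (is_derive_scal _ s (Binomial.C r i) _ (T_derive a c i s HD)) HKd) as Hm.
      replace (Binomial.C r i * (T a c (S i) s * K a c (S r - i) s + T a c i s * K a c (S (S r - i)) s))
        with (Binomial.C r i * T a c (S i) s * K a c (S r - i) s + Binomial.C r i * T a c i s * K a c (S (S r - i)) s) by ring.
      exact Hm. }
    etransitivity. { apply is_derive_unique. exact (is_derive_fsum (fun i u => Binomial.C r i * T a c i u * K a c (S r - i) u) _ (S r) s Hterm). }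
    set (A := fun i => T a c i s * K a c (S (S r) - i) s).
    rewrite (fsum_ext _ (fun i => Binomial.C r i * (A (S i) + A i))).
    2: { intros i Hi. unfold A. replace (S (S r) - S i)%nat with (S r - i)%nat by lia.
         replace (S (S r) - i)%nat with (S (S r - i)) by lia. reflexivity. }
    rewrite pascal_fsum. apply fsum_ext. intros i Hi. unfold A. ring.
Qed.

Lemma U0_indep a c s : U a c 0 s = U a 0 0 s.
Proof. unfold U. apply PSeries_ext. intros k. unfold bc. simpl. ring. Qed.

Lemma G_shift a c u : (forall k, 0 <= a k) -> 0 < a 0%nat -> Dom a u -> G a c u = G a 0 u - c * u.
Proof.
  intros Hp H0 HD. pose proof (T0_pos a 0 u Hp H0 HD) as HT.
  unfold G, T in *. rewrite U0_indep. rewrite Rmult_0_l, Ropp_0, exp_0, Rmult_1_r in *.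
  rewrite ln_mult, ln_exp by (auto; apply exp_pos). ring.
Qed.

Lemma fulcrum_G a s : fulcrum a s = G a 0 s.
Proof.
  unfold fulcrum, G, T, U, pf. rewrite Rmult_0_l, Ropp_0, exp_0, Rmult_1_r. f_equal.
  apply PSeries_ext. intros k. unfold bc. simpl. ring.
Qed.

Lemma Derive_n_fulcrum a m s : Derive_n (fulcrum a) m s = K a 0 m s.
Proof. unfold K. apply Derive_n_ext. apply fulcrum_G. Qed.

Lemma K_shift1 a c s : (forall k, 0 <= a k) -> 0 < a 0%nat -> Dom a s -> K a c 1 s = K a 0 1 s - c.
Proof.
  intros Hp H0 HD. rewrite !K_S. change (K a c 0) with (G a c). change (K a 0 0) with (G a 0).
  rewrite (Derive_ext_loc (G a c) (fun v => G a 0 v - c * v)).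
  2: { generalize (Dom_open a s HD). apply filter_imp. intros u Hu. apply G_shift; auto. }
  apply is_derive_unique. apply is_derive_minus_R.
  apply Derive_correct. exists (T a 0 1 s / T a 0 0 s). apply G_derive; auto.
  replace c with (c * 1) at 2 by ring. apply is_derive_scal. apply (is_derive_id (K := R_AbsRing)).
Qed.

Lemma K_shift a c m s : (forall k, 0 <= a k) -> 0 < a 0%nat -> Dom a s -> (2 <= m)%nat -> K a c m s = K a 0 m s.
Proof.
  intros Hp H0 HD Hm.
  assert (H2 : forall u, Dom a u -> K a c 2 u = K a 0 2 u).
  { intros u Hu. rewrite !(K_S _ _ 1).
    rewrite (Derive_ext_loc (K a c 1) (fun v => K a 0 1 v - c)).
    2: { generalize (Dom_open a u Hu). apply filter_imp. intros v Hv. apply K_shift1; auto. }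
    apply is_derive_unique. replace (Derive (K a 0 1) u) with (Derive (K a 0 1) u - 0) by ring.
    apply is_derive_minus_R. apply Derive_correct. apply (proj1 (main_ind a 0 Hp H0 1)); auto.
    apply is_derive_const_R. }
  replace m with ((m - 2) + 2)%nat by lia. unfold K. rewrite <- !Derive_n_comp.
  apply Derive_n_ext_loc. generalize (Dom_open a s HD). apply filter_imp. intros u Hu. apply H2; auto.
Qed.

Lemma U_series a c r s : U a c r s = Series (fun k => (INR k - c) ^ r * (a k * exp s ^ k)).
Proof. unfold U, PSeries, bc. apply Series_ext. intros; ring. Qed.

Lemma U0_series a c s : U a c 0 s = Series (fun k => a k * exp s ^ k).
Proof. unfold U, PSeries, bc. apply Series_ext. intros; simpl; ring. Qed.

Lemma T_ratio a c r s : T a c r s / T a c 0 s =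
  Series (fun k => (INR k - c) ^ r * (a k * exp s ^ k)) / Series (fun k => a k * exp s ^ k).
Proof.
  unfold T. rewrite U_series, U0_series. pose proof (exp_pos (- (c * s))).
  destruct (Req_dec (Series (fun k => a k * exp s ^ k)) 0) as [E|E].
  - rewrite E. unfold Rdiv. rewrite Rmult_0_l, !Rinv_0. ring.
  - field. split; lra.
Qed.

Lemma pf_series a t : pf a t = Series (fun k => a k * t ^ k).
Proof. reflexivity. Qed.

Lemma mean_eq a s : (forall k, 0 <= a k) -> 0 < a 0%nat -> Dom a s -> mean_f a (exp s) = K a 0 1 s.
Proof.
  intros Hp H0 HD. pose proof (proj2 (main_ind a 0 Hp H0 0) s HD) as R0.
  simpl in R0. rewrite C_n_0 in R0. pose proof (T0_pos a 0 s Hp H0 HD).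
  assert (K a 0 1 s = T a 0 1 s / T a 0 0 s) by (rewrite R0; field; lra).
  rewrite H1, T_ratio. unfold mean_f. rewrite pf_series. f_equal. apply Series_ext. intros; ring.
Qed.

Lemma var_eq a s : (forall k, 0 <= a k) -> 0 < a 0%nat -> Dom a s -> var_f a (exp s) = K a 0 2 s.
Proof.
  intros Hp H0 HD. set (c := mean_f a (exp s)).
  pose proof (proj2 (main_ind a c Hp H0 1) s HD) as R1.
  simpl in R1. rewrite C_n_0, C_n_n in R1. pose proof (T0_pos a c s Hp H0 HD).
  assert (Hk1 : K a c 1 s = 0) by (rewrite K_shift1, <- mean_eq by auto; unfold c; ring).
  rewrite Hk1, Rmult_0_r, Rplus_0_r in R1.
  rewrite <- (K_shift a c 2 s Hp H0 HD) by lia.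
  assert (K a c 2 s = T a c 2 s / T a c 0 s) by (rewrite R1; field; lra).
  rewrite H1, T_ratio. unfold var_f. rewrite pf_series. reflexivity.
Qed.

Lemma ex_series_ext_R (u v : nat -> R) : (forall k, u k = v k) -> ex_series u -> ex_series v.
Proof. apply (ex_series_ext (V := R_NormedModule)). Qed.

Lemma var_pos a s : in_class_K a -> Dom a s -> 0 < var_f a (exp s).
Proof.
  intros [Hp [H0 [[n0 [Hn0 Hn0']] _]]] HD. set (c := mean_f a (exp s)).
  unfold var_f. rewrite pf_series. fold c.
  set (w := fun k => a k * exp s ^ k).
  assert (Hw : forall k, 0 <= w k) by (intros; unfold w; apply Rmult_le_pos; auto; apply pow_le; left; apply exp_pos).
  assert (Hws : ex_series w).
  { eapply ex_series_ext_R. 2: apply (ex_series_bc a 0 0 s HD). intros k. unfold bc, w. simpl. ring. }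
  assert (Hw2 : ex_series (fun k => (INR k - c) ^ 2 * w k)).
  { eapply ex_series_ext_R. 2: apply (ex_series_bc a c 2 s HD). intros k. unfold bc, w. ring. }
  assert (HW : 0 < Series w).
  { eapply Rlt_le_trans; [|apply (Series_ge_term w 0%nat); auto]. unfold w. simpl. lra. }
  apply Rdiv_lt_0_compat; auto.
  assert (Hnn : forall k, 0 <= (INR k - c) ^ 2 * w k) by (intros; apply Rmult_le_pos; auto; apply pow2_ge_0).
  assert (Hwn0 : 0 < w n0).
  { unfold w. apply Rmult_lt_0_compat. destruct (Hp n0); auto. congruence. apply pow_lt, exp_pos. }
  destruct (Req_dec c 0) as [Hc|Hc].
  - eapply Rlt_le_trans; [|apply (Series_ge_term _ n0); auto].
    apply Rmult_lt_0_compat; auto. rewrite Hc, Rminus_0_r. apply pow_lt. apply lt_0_INR. lia.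
  - eapply Rlt_le_trans; [|apply (Series_ge_term _ 0%nat); auto].
    apply Rmult_lt_0_compat. simpl. nra. unfold w; simpl; lra.
Qed.


Definition wS (a : nat -> R) (s : R) : nat -> R := fun k => a k * exp s ^ k.
Definition zS (a : nat -> R) (s : R) : nat -> R := fun k => (INR k - mean_f a (exp s)) / sd_f a (exp s).
Definition ch (a : nat -> R) (r : nat) (s : R) : R := momw (wS a s) (zS a s) r.
Definition kc (a : nat -> R) (m : nat) (s : R) : R := K a (mean_f a (exp s)) m s / sd_f a (exp s) ^ m.

Lemma sd_pos a s : in_class_K a -> Dom a s -> 0 < sd_f a (exp s).
Proof. intros. unfold sd_f. apply sqrt_lt_R0. apply var_pos; auto. Qed.

Lemma sd_sq a s : in_class_K a -> Dom a s -> sd_f a (exp s) ^ 2 = K a 0 2 s.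
Proof.
  intros HK HD. pose proof (var_pos a s HK HD). destruct HK as [Hp [H0 _]].
  unfold sd_f. simpl. rewrite Rmult_1_r, sqrt_sqrt by lra.
  apply var_eq; auto.
Qed.

Lemma W_pos a s : in_class_K a -> Dom a s -> 0 < Series (fun k => a k * exp s ^ k).
Proof.
  intros [Hp [H0 _]] HD. rewrite <- U0_series with (c := 0).
  pose proof (T0_pos a 0 s Hp H0 HD). unfold T in H. rewrite Rmult_0_l, Ropp_0, exp_0, Rmult_1_r in H. auto.
Qed.

Lemma ch_T a r s : in_class_K a -> Dom a s ->
  ch a r s = T a (mean_f a (exp s)) r s / T a (mean_f a (exp s)) 0 s / sd_f a (exp s) ^ r.
Proof.
  intros HK HD. pose proof (sd_pos a s HK HD) as Hs.
  rewrite T_ratio. unfold ch, momw, wS, zS.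
  rewrite (Series_ext _ (fun k => ((INR k - mean_f a (exp s)) ^ r * (a k * exp s ^ k)) * / sd_f a (exp s) ^ r)).
  rewrite Series_scal_r. pose proof (W_pos a s HK HD). pose proof (pow_lt _ r Hs).
  field. split; lra.
  intros k. unfold Rdiv. rewrite Rpow_mult_distr, pow_inv. ring.
Qed.

Lemma glue_rec a s : in_class_K a -> Dom a s ->
  ch a 0 s = 1 /\ kc a 1 s = 0 /\ kc a 2 s = 1 /\
  forall r, ch a (S r) s = fsum (fun i => Binomial.C r i * ch a i s * kc a (S r - i) s) (S r).
Proof.
  intros HK HD. pose proof (sd_pos a s HK HD) as Hs.
  pose proof HK as [Hp [H0 _]].
  set (c := mean_f a (exp s)). set (sg := sd_f a (exp s)) in *.
  pose proof (T0_pos a c s Hp H0 HD) as HT0.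
  split; [|split; [|split]].
  - rewrite ch_T by auto. fold c sg. simpl. field. lra.
  - unfold kc. fold c. rewrite K_shift1 by auto. unfold c. rewrite mean_eq by auto. unfold Rdiv. ring.
  - unfold kc. fold c sg. rewrite K_shift by (auto; lia). rewrite <- (sd_sq a s) by auto. fold sg. field.
    lra.
  - intros r. rewrite !ch_T by auto. fold c sg.
    rewrite (proj2 (main_ind a c Hp H0 r) s HD).
    unfold Rdiv. rewrite Rmult_assoc, Rmult_comm, <- fsum_scal.
    apply fsum_ext. intros i Hi. rewrite ch_T by auto. unfold kc. fold c sg.
    replace (sg ^ S r) with (sg ^ i * sg ^ (S r - i)) by (rewrite <- pow_add; f_equal; lia).
    assert (0 < sg ^ i) by (apply pow_lt; lra). assert (0 < sg ^ (S r - i)) by (apply pow_lt; lra).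
    field. repeat split; lra.
Qed.

Lemma kc_norm a m s : in_class_K a -> Dom a s -> (2 <= m)%nat -> kc a m s = norm_deriv a m s.
Proof.
  intros HK HD Hm. pose proof (sd_pos a s HK HD) as Hs. pose proof HK as [Hp [H0 _]].
  unfold kc, norm_deriv. rewrite !Derive_n_fulcrum. rewrite K_shift by auto. f_equal.
  rewrite <- sd_sq by auto.
  rewrite <- (Rpower_pow 2 (sd_f a (exp s))) by auto.
  rewrite Rpower_mult. rewrite <- (Rpower_pow m (sd_f a (exp s))) by auto.
  f_equal. simpl. field.
Qed.

Lemma left_to_filter (L : Rbar) : Filter (left_to L).
Proof.
  destruct L; simpl.
  - apply at_left_proper_filter.
  - apply Rbar_locally_filter.
  - apply Rbar_locally_filter.
Qed.

Lemma filt_dom a : in_class_K a -> left_to (Rbar_ln (CV_radius a)) (Dom a).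
Proof.
  intros [_ [_ [_ Hr]]]. unfold Dom. destruct (CV_radius a) as [r| |] eqn:E; simpl in *.
  - unfold at_left, within. apply filter_forall. intros u Hu. rewrite Rabs_pos_eq by (left; apply exp_pos).
    rewrite <- (exp_ln r) by auto. apply exp_increasing; auto.
  - exists 0. intros; exact I.
  - contradiction.
Qed.

Lemma filt_exp a : in_class_K a -> filterlim exp (left_to (Rbar_ln (CV_radius a))) (left_to (CV_radius a)).
Proof.
  intros [_ [_ [_ Hr]]]. destruct (CV_radius a) as [r| |] eqn:E; simpl in *.
  - intros P HP. unfold filtermap. 
    assert (Hc : filterlim exp (locally (ln r)) (locally (exp (ln r)))) by apply continuous_exp.
    rewrite exp_ln in Hc by auto.
    specialize (Hc _ HP). unfold filtermap in Hc. unfold at_left, within in *.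
    generalize Hc. apply filter_imp. intros u Hu Hlt. apply Hu.
    rewrite <- (exp_ln r) by auto. apply exp_increasing; auto.
  - apply is_lim_exp_p.
  - contradiction.
Qed.

Theorem theorem3p3 (a : nat -> R) (n : nat) :
  in_class_K a ->
  gaussian a ->
  (exists k : nat, n = (2 * k)%nat) -> (4 <= n)%nat ->
  (forall j : nat, (3 <= j <= n)%nat ->
     exists M : R,
       left_to (Rbar_ln (CV_radius a)) (fun s => Rabs (norm_deriv a j s) <= M)) ->
  forall j : nat, (3 <= j < n)%nat ->
    filterlim (norm_deriv a j) (left_to (Rbar_ln (CV_radius a))) (locally 0).
Proof.
  intros HK Hg Hev Hn4 Hb j Hj.
  set (Fl := left_to (Rbar_ln (CV_radius a))).
  assert (FF : Filter Fl) by apply left_to_filter.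
  assert (HD := filt_dom a HK). fold Fl in HD.
  apply (filterlim_ext_loc (kc a j)).
  { generalize HD. apply filter_imp. intros s Hs. apply kc_norm; auto; lia. }
  apply (final_abstract Fl FF (ch a) (kc a) n Hev Hn4).
  - generalize HD. apply filter_imp. intros s Hs. destruct (glue_rec a s HK Hs) as (A1 & A2 & A3 & A4).
    repeat split; auto.
  - intros m Hm. destruct (Hb m Hm) as [M HM]. exists M.
    generalize (@filter_and _ Fl FF _ _ HD HM). apply filter_imp. intros s [Hs HMs].
    rewrite kc_norm by (auto; lia). auto.
  - intros j0 L eps Hj0 HL Heps.
    apply (mom_conv Fl FF (wS a) (zS a) n j0 L eps Hev Hj0 HL Heps).
    + generalize HD. apply filter_imp. intros s Hs. pose proof HK as [Hp [H0 _]].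
      split; [|split; [|split]].
      * intros k. unfold wS. apply Rmult_le_pos; auto. apply pow_le. left; apply exp_pos.
      * eapply ex_series_ext_R. 2: apply (ex_series_bc a 0 0 s Hs). intros k. unfold bc, wS. simpl. ring.
      * apply W_pos; auto.
      * pose proof (sd_pos a s HK Hs).
        eapply ex_series_ext_R.
        2: { apply (ex_series_scal_l (V := R_NormedModule) (/ sd_f a (exp s) ^ n)).
             apply (ex_series_bc a (mean_f a (exp s)) n s Hs). }
        intros k. unfold bc, wS, zS. change (scal ?x ?y) with (x * y). unfold Rdiv.
        rewrite Rpow_mult_distr, pow_inv. ring.
    + intros x. 
      apply (filterlim_ext (fun s => cdf_breve a (exp s) x)).
      { intros s. unfold cdf_breve, cdfw, wS, zS, Ind. rewrite pf_series. f_equal.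
        apply Series_ext. intros k. destruct (Rle_dec _ x); ring. }
      apply (filterlim_comp _ _ _ exp (fun t => cdf_breve a t x) Fl (left_to (CV_radius a))).
      apply filt_exp; auto. apply Hg.
  auto.
Qed.
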